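(* Let $(X,d)$ be a geodesic metric space with basepoint $x_0$, and let $(T_X,d^* )$ be its end-approximating tree. Let $x,y\in X$ and $r\in[0,\infty)$. Then $x$ and $y$ lie in the same path component of $X\setminus B(x_0,r)$ if and only if $([x],[y])^*_{[x_0]}>r$.
   Context: $B(x_0,r)$ is the closed ball. With $(x,y)_{x_0}=\frac12(d(x_0,x)+d(x_0,y)-d(x,y))$, let $(x,y)'_{x_0}=\sup\min_{1\leqslant i\leqslant n-1}(x_i,x_{i+1})_{x_0}$, the supremum over all finite sequences $x=x_1,\ldots,x_n=y$ in $X$, and $d'(x,y)=d(x_0,x)+d(x_0,y)-2(x,y)'_{x_0}$. The end-approximating tree is $T_X=X/\sim$, $x\sim y$ iff $d'(x,y)=0$, with metric $d^*([x],[y])=d'(x,y)$, and $([x],[y])^*_{[x_0]}=\frac12(d^*([x_0],[x])+d^*([x_0],[y])-d^*([x],[y]))$ is the Gromov product in $T_X$ (it equals $(x,y)'_{x_0}$). *)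

(* Defs.v *)
From Stdlib Require Import Reals List.
From Coquelicot Require Import Coquelicot.
Open Scope R_scope.

Section MetricDefs.
Context {X : Type} (d : X -> X -> R).

Definition is_metric : Prop :=
  (forall x y, 0 <= d x y) /\
  (forall x y, d x y = 0 <-> x = y) /\
  (forall x y, d x y = d y x) /\
  (forall x y z, d x z <= d x y + d y z).

Definition geodesic : Prop :=
  forall a b : X, exists g : R -> X,
    g 0 = a /\ g (d a b) = b /\
    forall s t, 0 <= s <= d a b -> 0 <= t <= d a b -> d (g s) (g t) = Rabs (s - t).

Definition path_continuous (p : R -> X) : Prop :=
  forall t, 0 <= t <= 1 -> forall eps, 0 < eps -> exists delta, 0 < delta /\
    forall s, 0 <= s <= 1 -> Rabs (s - t) < delta -> d (p s) (p t) < eps.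

Definition same_path_component (S : X -> Prop) (x y : X) : Prop :=
  exists p : R -> X, path_continuous p /\ p 0 = x /\ p 1 = y /\
    forall t, 0 <= t <= 1 -> S (p t).

Definition closed_ball (x0 : X) (r : R) (z : X) : Prop := d x0 z <= r.

Definition ball_complement (x0 : X) (r : R) (z : X) : Prop := ~ closed_ball x0 r z.

Definition gromov (x0 x y : X) : R := (d x0 x + d x0 y - d x y) / 2.

(* min_{i} (x_i, x_{i+1})_{x0} along the sequence a :: l ++ [b] *)
Fixpoint chain_min (x0 a : X) (l : list X) (b : X) : R :=
  match l with
  | nil => gromov x0 a b
  | c :: l' => Rmin (gromov x0 a c) (chain_min x0 c l' b)
  end.

Definition chain_values (x0 x y : X) (v : R) : Prop :=
  exists l : list X, v = chain_min x0 x l y.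

(* (x,y)'_{x0} : supremum of chain_values (finite since bounded by d(x0,x)) *)
Definition gromov' (x0 x y : X) : R := real (Lub_Rbar (chain_values x0 x y)).

(* d'(x,y) = d(x0,x) + d(x0,y) - 2 (x,y)'_{x0} ; this is d*([x],[y]) on T_X *)
Definition dprime (x0 x y : X) : R := d x0 x + d x0 y - 2 * gromov' x0 x y.

(* Gromov product ([x],[y])^*_{[x0]} in T_X, computed via d*([a],[b]) = d'(a,b) *)
Definition tree_gromov (x0 x y : X) : R :=
  (dprime x0 x0 x + dprime x0 x0 y - dprime x0 x y) / 2.

End MetricDefs.

(* Main.v *)
Require Import Defs.
From Stdlib Require Import Reals List Lra.
From Coquelicot Require Import Coquelicot.
Open Scope R_scope.

Section S.
Context {X : Type} (d : X -> X -> R) (Hmetric : is_metric d).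

Lemma chain_min_app x0 a l c b :
  chain_min d x0 a (l ++ c :: nil) b = Rmin (chain_min d x0 a l c) (gromov d x0 c b).
Proof.
  revert a; induction l as [|e l IH]; intros a; simpl.
  - reflexivity.
  - rewrite IH. unfold Rmin. repeat destruct Rle_dec; lra.
Qed.

Lemma chain_min_le x0 a l b : chain_min d x0 a l b <= d x0 a.
Proof.
  destruct Hmetric as [Hpos [Hz [Hs Ht]]].
  destruct l as [|c l]; simpl; unfold gromov.
  - specialize (Ht x0 a b). lra.
  - specialize (Ht x0 a c). eapply Rle_trans; [apply Rmin_l|]. unfold gromov. lra.
Qed.

Lemma gromov'_gt x0 a b r : (exists l, chain_min d x0 a l b > r) -> gromov' d x0 a b > r.
Proof.
  intros [l Hl]. unfold gromov'.
  destruct (Lub_Rbar_correct (chain_values d x0 a b)) as [Hub Hlub].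
  assert (H1 : Rbar_le (chain_min d x0 a l b) (Lub_Rbar (chain_values d x0 a b)))
    by (apply Hub; exists l; reflexivity).
  assert (H2 : Rbar_le (Lub_Rbar (chain_values d x0 a b)) (d x0 a)).
  { apply Hlub. intros v [l' ->]. simpl. apply chain_min_le. }
  destruct (Lub_Rbar (chain_values d x0 a b)); simpl in *; try contradiction; lra.
Qed.

Lemma gromov'_gt_inv x0 a b r : 0 <= r -> gromov' d x0 a b > r -> exists l, chain_min d x0 a l b > r.
Proof.
  intros hr H. destruct (Classical_Prop.classic (exists l, chain_min d x0 a l b > r)) as [?|Hn]; auto.
  exfalso. unfold gromov' in H.
  destruct (Lub_Rbar_correct (chain_values d x0 a b)) as [Hub Hlub].
  assert (H2 : Rbar_le (Lub_Rbar (chain_values d x0 a b)) r).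
  { apply Hlub. intros v [l' ->]. simpl. apply Rnot_lt_le. intro. apply Hn. exists l'. lra. }
  destruct (Lub_Rbar (chain_values d x0 a b)); simpl in *; try contradiction; lra.
Qed.

Lemma gromov'_base x0 z : gromov' d x0 x0 z = 0.
Proof.
  destruct Hmetric as [Hpos [Hz [Hs Ht]]].
  assert (H00 : d x0 x0 = 0) by (apply Hz; reflexivity).
  unfold gromov'.
  destruct (Lub_Rbar_correct (chain_values d x0 x0 z)) as [Hub Hlub].
  replace (Lub_Rbar (chain_values d x0 x0 z)) with (Finite 0). reflexivity.
  apply Rbar_le_antisym.
  - apply Hub. exists nil. simpl. unfold gromov. rewrite H00. field.
  - apply Hlub. intros v [l ->]. simpl. destruct l as [|c l]; simpl; unfold gromov.
    + rewrite H00. lra.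
    + eapply Rle_trans; [apply Rmin_l|]. unfold gromov. rewrite H00. right. field.
Qed.

Lemma tree_gromov_eq x0 a b : tree_gromov d x0 a b = gromov' d x0 a b.
Proof.
  unfold tree_gromov, dprime. rewrite !gromov'_base.
  destruct Hmetric as [Hpos [Hz [Hs Ht]]].
  rewrite (proj2 (Hz x0 x0) eq_refl). field.
Qed.

End S.
Section S.
Context {X : Type} (d : X -> X -> R) (Hmetric : is_metric d).

Lemma spc_trans (S : X -> Prop) a b c :
  same_path_component d S a b -> same_path_component d S b c -> same_path_component d S a c.
Proof.
  destruct Hmetric as [Hpos [Hz [Hs Ht]]].
  intros [p1 [C1 [A1 [B1 S1]]]] [p2 [C2 [A2 [B2 S2]]]].
  exists (fun t => if Rle_dec t (1/2) then p1 (2*t) else p2 (2*t-1)).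
  split; [|split; [|split]].
  - intros t Ht01 eps Heps.
    destruct (Rle_dec t (1/2)) as [Hle|Hgt].
    + destruct (C1 (2*t) ltac:(lra) (eps/2) ltac:(lra)) as [d1 [Hd1 P1]].
      destruct (C2 0 ltac:(lra) (eps/2) ltac:(lra)) as [d2 [Hd2 P2]].
      exists (Rmin d1 d2 / 2). split. { assert (0 < Rmin d1 d2) by (apply Rmin_glb_lt; lra). lra. }
      intros s Hs01 Hst. pose proof (Rmin_l d1 d2). pose proof (Rmin_r d1 d2).
      destruct (Rle_dec s (1/2)) as [Hsle|Hsgt].
      * assert (eps/2 < eps) by lra.
        assert (d (p1 (2*s)) (p1 (2*t)) < eps/2); [|lra].
        apply P1; [lra|]. unfold Rabs in *; destruct Rcase_abs; destruct Rcase_abs; lra.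
      * assert (d (p2 (2*s-1)) (p2 0) < eps/2).
        { apply P2; [lra|]. unfold Rabs in *; destruct Rcase_abs; destruct Rcase_abs; lra. }
        assert (d (p1 1) (p1 (2*t)) < eps/2).
        { apply P1; [lra|]. unfold Rabs in *; destruct Rcase_abs; destruct Rcase_abs; lra. }
        rewrite B1, <- A2 in H2.
        pose proof (Ht (p2 (2*s-1)) (p2 0) (p1 (2*t))). lra.
    + destruct (C1 1 ltac:(lra) (eps/2) ltac:(lra)) as [d1 [Hd1 P1]].
      destruct (C2 (2*t-1) ltac:(lra) (eps/2) ltac:(lra)) as [d2 [Hd2 P2]].
      exists (Rmin d1 d2 / 2). split. { assert (0 < Rmin d1 d2) by (apply Rmin_glb_lt; lra). lra. }
      intros s Hs01 Hst. pose proof (Rmin_l d1 d2). pose proof (Rmin_r d1 d2).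
      destruct (Rle_dec s (1/2)) as [Hsle|Hsgt].
      * assert (d (p1 (2*s)) (p1 1) < eps/2).
        { apply P1; [lra|]. unfold Rabs in *; destruct Rcase_abs; destruct Rcase_abs; lra. }
        assert (d (p2 0) (p2 (2*t-1)) < eps/2).
        { apply P2; [lra|]. unfold Rabs in *; destruct Rcase_abs; destruct Rcase_abs; lra. }
        rewrite A2, <- B1 in H2.
        pose proof (Ht (p1 (2*s)) (p1 1) (p2 (2*t-1))). lra.
      * assert (d (p2 (2*s-1)) (p2 (2*t-1)) < eps/2); [|lra].
        apply P2; [lra|]. unfold Rabs in *; destruct Rcase_abs; destruct Rcase_abs; lra.
  - destruct Rle_dec; [|lra]. rewrite Rmult_0_r. exact A1.
  - destruct Rle_dec; [lra|]. replace (2*1-1) with 1 by lra. exact B2.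
  - intros t Ht01. destruct Rle_dec; [apply S1|apply S2]; lra.
Qed.

Lemma geod_path (Hgeod : geodesic d) x0 r a b :
  gromov d x0 a b > r -> same_path_component d (ball_complement d x0 r) a b.
Proof.
  destruct Hmetric as [Hpos [Hz [Hs Ht]]].
  intros Hg. destruct (Hgeod a b) as [g [G0 [G1 Gi]]].
  set (D := d a b) in *. assert (HD : 0 <= D) by apply Hpos.
  exists (fun t => g (t * D)). split; [|split; [|split]].
  - intros t Ht01 eps Heps. exists (eps / (D+1)). split.
    { apply Rdiv_lt_0_compat; lra. }
    intros s Hs01 Hst. rewrite Gi by nra.
    replace (s*D - t*D) with ((s-t)*D) by ring. rewrite Rabs_mult, (Rabs_pos_eq D HD).
    apply Rle_lt_trans with (eps/(D+1) * D). { apply Rmult_le_compat_r; lra. }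
    assert (0 < eps/(D+1)) by (apply Rdiv_lt_0_compat; lra).
    replace (eps/(D+1)*D) with (eps - eps/(D+1)) by (field; lra). lra.
  - simpl. rewrite Rmult_0_l. exact G0.
  - simpl. rewrite Rmult_1_l. exact G1.
  - intros t Ht01. unfold ball_complement, closed_ball. intro Hc.
    assert (E1 : d a (g (t*D)) = t*D).
    { rewrite <- G0 at 1. rewrite Gi by nra. rewrite Rabs_left1 by nra. ring. }
    assert (E2 : d (g (t*D)) b = D - t*D).
    { rewrite <- G1 at 1. rewrite Gi by nra. rewrite Rabs_left1 by nra. ring. }
    pose proof (Ht x0 (g (t*D)) a). pose proof (Ht x0 (g (t*D)) b).
    rewrite (Hs (g (t*D)) a) in H. unfold gromov in Hg. fold D in Hg. lra.
Qed.

Lemma chain_path (Hgeod : geodesic d) x0 r l : forall a b,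
  chain_min d x0 a l b > r -> same_path_component d (ball_complement d x0 r) a b.
Proof.
  induction l as [|c l IH]; intros a b H; simpl in H.
  - apply geod_path; auto.
  - apply spc_trans with c.
    + apply geod_path; auto. eapply Rlt_le_trans; [exact H|apply Rmin_l].
    + apply IH. eapply Rlt_le_trans; [exact H|apply Rmin_r].
Qed.

End S.
Section S.
Context {X : Type} (d : X -> X -> R) (Hmetric : is_metric d).

Lemma connect01 (P : R -> Prop) :
  P 0 ->
  (forall t, 0 <= t <= 1 -> exists delta, 0 < delta /\ forall s, 0 <= s <= 1 ->
      Rabs (s - t) < delta -> (P s -> P t) /\ (P t -> P s)) ->
  P 1.
Proof.
  intros P0 Hloc.
  set (A := fun t => 0 <= t <= 1 /\ forall s, 0 <= s <= t -> P s).
  assert (HA0 : A 0). { split; [lra|]. intros s Hs. replace s with 0 by lra. exact P0. }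
  assert (Hb : bound A). { exists 1. intros t [Ht _]. lra. }
  destruct (completeness A Hb (ex_intro _ 0 HA0)) as [m [Hub Hlub]].
  assert (Hm0 : 0 <= m) by (apply Hub; exact HA0).
  assert (Hm1 : m <= 1) by (apply Hlub; intros t [Ht _]; lra).
  destruct (Hloc m (conj Hm0 Hm1)) as [del [Hdel Hl]].
  assert (Ha : exists a, A a /\ m - del < a).
  { apply Classical_Prop.NNPP. intro Hn.
    assert (m <= m - del); [|lra].
    apply Hlub. intros t Ht. apply Rnot_lt_le. intro. apply Hn. exists t. auto. }
  destruct Ha as [a [[Ha01 HaP] Ham]].
  assert (Ham' : a <= m) by (apply Hub; split; auto).
  assert (Pm : P m).
  { apply (Hl a); [lra| |apply HaP; lra]. unfold Rabs; destruct Rcase_abs; lra. }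
  set (b := Rmin (m + del/2) 1).
  assert (Hb1 : b <= 1) by apply Rmin_r.
  assert (Hb2 : b <= m + del/2) by apply Rmin_l.
  assert (Hb3 : m <= b) by (apply Rmin_glb; lra).
  assert (HAb : A b).
  { split; [lra|]. intros s Hs.
    destruct (Rle_dec s a). { apply HaP; lra. }
    apply (Hl s); [lra| |exact Pm]. unfold Rabs; destruct Rcase_abs; lra. }
  assert (b <= m) by (apply Hub; exact HAb).
  destruct HAb as [_ HAb]. apply HAb.
  unfold b in *. destruct (Rle_dec (m + del/2) 1).
  - rewrite Rmin_left in H by lra. lra.
  - rewrite Rmin_right in * by lra. lra.
Qed.

Lemma path_chain x0 r x y :
  same_path_component d (ball_complement d x0 r) x y -> exists l, chain_min d x0 x l y > r.
Proof.
  destruct Hmetric as [Hpos [Hz [Hs Ht]]].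
  intros [p [C [P0 [P1 Sp]]]].
  assert (Hout : forall t, 0 <= t <= 1 -> d x0 (p t) > r).
  { intros t Ht01. specialize (Sp t Ht01). unfold ball_complement, closed_ball in Sp. lra. }
  rewrite <- P1.
  apply (connect01 (fun t => exists l, chain_min d x0 x l (p t) > r)).
  - exists nil. simpl. rewrite P0. unfold gromov. rewrite (proj2 (Hz x x) eq_refl).
    rewrite <- P0. specialize (Hout 0 ltac:(lra)). lra.
  - intros t Ht01. pose proof (Hout t Ht01) as Ho.
    destruct (C t Ht01 (d x0 (p t) - r) ltac:(lra)) as [del [Hdel Hc]].
    exists del. split; [exact Hdel|]. intros s Hs01 Hst.
    specialize (Hc s Hs01 Hst).
    pose proof (Ht x0 (p s) (p t)). pose proof (Hs (p s) (p t)).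
    assert (G1 : gromov d x0 (p s) (p t) > r) by (unfold gromov; lra).
    assert (G2 : gromov d x0 (p t) (p s) > r) by (unfold gromov; lra).
    split.
    + intros [l Hl]. exists (l ++ p s :: nil). rewrite chain_min_app.
      apply Rmin_glb_lt; auto.
    + intros [l Hl]. exists (l ++ p t :: nil). rewrite chain_min_app.
      apply Rmin_glb_lt; auto.
Qed.

End S.

Theorem lemma6p3 (X : Type) (d : X -> X -> R) (Hmetric : is_metric d)
  (Hgeod : geodesic d) (x0 x y : X) (r : R) (hr : 0 <= r) :
  same_path_component d (ball_complement d x0 r) x y <->
  tree_gromov d x0 x y > r.
Proof.
  rewrite tree_gromov_eq by exact Hmetric. split.
  - intros H. apply gromov'_gt; auto. apply path_chain; auto.
  - intros H. destruct (gromov'_gt_inv d x0 x y r hr H) as [l Hl].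
    apply (chain_path d Hmetric Hgeod x0 r l); auto.
Qed.
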